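(* Let $I$ be a finite set and $\{V^{(\tau)}\}_{\tau\in I}$ a family of mixed $\mathbb{R}$-Hodge structures. Let $V=\bigotimes_{\tau\in I}V^{(\tau)}$ (tensor product of $\mathbb{R}$-vector spaces), and for $\tau\in I$ define $$W^\tau_nV=\bigotimes_{\nu\ne\tau}V^{(\nu)}\otimes W_nV^{(\tau)},\qquad F^p_\tau V_{\mathbb{C}}=\bigotimes_{\nu\ne\tau}V^{(\nu)}_{\mathbb{C}}\otimes F^pV^{(\tau)}_{\mathbb{C}}.$$ Then $(V,\{W^\tau_\bullet\}_{\tau\in I},\{F^\bullet_\tau\}_{\tau\in I})$ is an object of $\mathrm{MHS}^{\boxtimes I}_{\mathbb{R}}$.
   Context: $\mathrm{MHS}^{\boxtimes I}_{\mathbb{R}}$ is the category of triples $(V,\{W^\tau_\bullet\}_{\tau\in I},\{F^\bullet_\tau\}_{\tau\in I})$ where $V$ is a finite-dimensional $\mathbb{R}$-vector space, each $W^\tau_\bullet$ is a finite ascending filtration of $V$ by $\mathbb{R}$-subspaces and each $F^\bullet_\tau$ a finite descending filtration of $V_{\mathbb{C}}=V\otimes\mathbb{C}$ by $\mathbb{C}$-subspaces, such that (1) for each $\tau\in I$, $(V,W^\tau_\bullet,F^\bullet_\tau)$ is a mixed $\mathbb{R}$-Hodge structure; (2) for $\tau\ne\nu$ in $I$, the subspaces $W^\nu_nV_{\mathbb{C}}$, $F^m_\nu V_{\mathbb{C}}$ and $\overline{F}^m_\nu V_{\mathbb{C}}$ are mixed $\mathbb{C}$-Hodge structures with respect to the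 filtrations induced by $W^\tau_\bullet$, $F^\bullet_\tau$ and $\overline{F}^\bullet_\tau$. A mixed $\mathbb{R}$-Hodge structure is a triple $(V,W_\bullet,F^\bullet)$ with $\operatorname{Gr}^W_nV_{\mathbb{C}}=\bigoplus_{p+q=n}(F^p\cap\overline{F}^q)\operatorname{Gr}^W_nV_{\mathbb{C}}$ for all $n$. *)

(* Defs.v *)
From HB Require Import structures.
From mathcomp Require Import all_boot all_order all_algebra.
From mathcomp Require Import complex.
From mathcomp Require Import reals.
Set Implicit Arguments. Unset Strict Implicit. Unset Printing Implicit Defensive.
Import Order.TTheory GRing.Theory Num.Theory.
Local Open Scope ring_scope.

(* Subspaces of K^n are represented (mxalgebra) by row spaces of n x n
   matrices; filtrations are int-indexed families of such matrices. *)

Definition asc_filt_in (K : fieldType) (n : nat) (U : 'M[K]_n)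
    (W : int -> 'M[K]_n) : Prop :=
  (forall k : int, (W k :&: U <= W (k + 1)%R :&: U)%MS) /\
  exists a b : int,
    (forall k : int, k < a -> (W k :&: U <= (0 : 'M[K]_n))%MS) /\
    (forall k : int, b <= k -> (U <= W k)%MS).

Definition desc_filt_in (K : fieldType) (n : nat) (U : 'M[K]_n)
    (F : int -> 'M[K]_n) : Prop :=
  (forall k : int, (F (k + 1)%R :&: U <= F k :&: U)%MS) /\
  exists a b : int,
    (forall k : int, k <= a -> (U <= F k)%MS) /\
    (forall k : int, b <= k -> (F k :&: U <= (0 : 'M[K]_n))%MS).

(** Hodge decomposition of the graded pieces: for every weight [k],
    Gr^W_k U = (+)_{p+q=k} (F^p Gr^W_k U) /\ (G^q Gr^W_k U)   (direct sum),
    where the filtrations W, F, G are those induced on U and F^p Gr^W_k U is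
    represented by its preimage (F^p /\ W_k + W_{k-1}) in W_k.  The (direct)
    sum over all p : int is expressed as: Gr is spanned by finitely many
    summands, and every finite subfamily of distinct summands is independent
    modulo W_{k-1} (rank count). *)
Definition hodge_graded (K : fieldType) (n : nat) (U : 'M[K]_n)
    (W F G : int -> 'M[K]_n) : Prop :=
  forall k : int,
    let Wk := (W k :&: U)%MS in
    let Wk1 := (W (k - 1)%R :&: U)%MS in
    let H := fun p : int =>
      ((F p :&: Wk + Wk1) :&: (G (k - p)%R :&: Wk + Wk1))%MS in
    (exists s : seq int, (Wk <= Wk1 + \sum_(p <- s) H p)%MS) /\
    (forall s : seq int, uniq s ->
       (\rank (Wk1 + \sum_(p <- s) H p)%MS - \rank Wk1 =
        \sum_(p <- s) (\rank (H p) - \rank Wk1))%N).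

Definition mhsC (C : fieldType) (n : nat) (U : 'M[C]_n)
    (W F G : int -> 'M[C]_n) : Prop :=
  [/\ asc_filt_in U W, desc_filt_in U F, desc_filt_in U G
    & hodge_graded U W F G].

Definition cplx_mx (R : rcfType) (m n : nat) (A : 'M[R]_(m, n))
  : 'M[R[i]]_(m, n) := map_mx (fun x : R => Complex x 0) A.
Definition conj_mx (R : rcfType) (m n : nat) (A : 'M[R[i]]_(m, n))
  : 'M[R[i]]_(m, n) := map_mx (@conjc R) A.

Definition mhsR (R : rcfType) (n : nat) (W : int -> 'M[R]_n)
    (F : int -> 'M[R[i]]_n) : Prop :=
  [/\ asc_filt_in 1%:M W, desc_filt_in 1%:M F
    & hodge_graded 1%:M (fun k => cplx_mx (W k)) F (fun p => conj_mx (F p))].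

Definition mhs_boxI (R : rcfType) (I : finType) (n : nat)
    (W : I -> int -> 'M[R]_n) (F : I -> int -> 'M[R[i]]_n) : Prop :=
  (forall tau : I, mhsR (W tau) (F tau)) /\
  (forall tau nu : I, tau != nu -> forall m : int,
     let Wt := fun k => cplx_mx (W tau k) in
     let Ft := F tau in
     let Fbt := fun p => conj_mx (F tau p) in
     [/\ mhsC (cplx_mx (W nu m)) Wt Ft Fbt,
         mhsC (F nu m) Wt Ft Fbt
       & mhsC (conj_mx (F nu m)) Wt Ft Fbt]).

(** Tensor products of coordinate spaces K^(d t), t in I: the basis of
    (x)_t K^(d t) is indexed by the finite type of multi-indices. *)
Definition tidx (I : finType) (d : I -> nat) : finType :=
  {dffun forall t : I, 'I_(d t)}.
Definition tdim (I : finType) (d : I -> nat) : nat := #|{: tidx d}|.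

(** [tensmx A] has as row space the tensor product of the row spaces of the
    [A t] (its rows are the Kronecker products of rows of the [A t]). *)
Definition tensmx (K : comNzRingType) (I : finType) (d : I -> nat)
    (A : forall t : I, 'M[K]_(d t)) : 'M[K]_(tdim d) :=
  \matrix_(i, k) \prod_(t : I)
     A t ((enum_val i : tidx d) t) ((enum_val k : tidx d) t).

Definition tensW (R : rcfType) (I : finType) (d : I -> nat)
    (W : forall t : I, int -> 'M[R]_(d t)) (tau : I) : int -> 'M[R]_(tdim d) :=
  fun k => tensmx (fun nu => if nu == tau then W nu k else 1%:M).

Definition tensF (R : rcfType) (I : finType) (d : I -> nat)
    (F : forall t : I, int -> 'M[R[i]]_(d t)) (tau : I)
  : int -> 'M[R[i]]_(tdim d) :=
  fun p => tensmx (fun nu => if nu == tau then F nu p else 1%:M).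

(* Main.v *)
Require Import Defs.
From HB Require Import structures.
From mathcomp Require Import all_boot all_order all_algebra.
From mathcomp Require Import complex.
From mathcomp Require Import reals.
Import Order.TTheory GRing.Theory Num.Theory.
Local Open Scope ring_scope.
Local Set Implicit Arguments. Local Unset Strict Implicit.

Section DepDistr.
Variables (K : comNzRingType) (I : finType) (d : I -> nat).

Lemma dep_distr (F : forall t, 'I_(d t) -> K) :
  \prod_(t : I) \sum_(j : 'I_(d t)) F t j =
  \sum_(f : tidx d) \prod_(t : I) F t (f t).
Proof.
pose D := (\max_(t : I) d t)%N.+1.
have leD t : (d t <= D)%N by apply: leqW; exact: (@leq_bigmax I d t).
pose G t (n : nat) : K := oapp (F t) 0 (insub n : option 'I_(d t)).
have GF t (j : 'I_(d t)) : G t (val j) = F t j by rewrite /G valK.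
have G0 t n : (d t <= n)%N -> G t n = 0 by move=> h; rewrite /G insubF // ltnNge h.
have step1 t : \sum_(j : 'I_(d t)) F t j = \sum_(j < D) G t j.
  transitivity (\sum_(j < d t) G t j); first by apply: eq_bigr => j _; rewrite GF.
  rewrite (big_ord_widen _ (G t) (leD t)) big_mkcond /=.
  apply: eq_bigr => j _; case: ifP => // /negbT; rewrite -leqNgt => /G0 ->//.
rewrite (eq_bigr _ (fun t _ => step1 t)) bigA_distr_bigA /=.
rewrite (bigID (fun g : {ffun I -> 'I_D} => [forall t, (g t < d t)%N])) /=.
rewrite [X in _ + X]big1 ?addr0; last first.
  move=> g /forallPn [t]; rewrite -leqNgt => ht.
  by rewrite (bigD1 t) //= G0 // mul0r.
pose phi (f : tidx d) : {ffun I -> 'I_D} := [ffun t => widen_ord (leD t) (f t)].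
have phiI : injective phi.
  move=> f1 f2 /ffunP h; apply/ffunP => t; apply/val_inj.
  by have := h t; rewrite !ffunE => /(congr1 val).
have -> : \sum_(g : {ffun I -> 'I_D} | [forall t, (g t < d t)%N]) \prod_t G t (g t) =
          \sum_(g in phi @: [set: tidx d]) \prod_t G t (g t).
  apply: eq_bigl => g; apply/idP/idP.
    move=> /forallP hg.
    apply/imsetP; exists [ffun t => Ordinal (hg t)] => //.
    by apply/ffunP => t; rewrite !ffunE; apply/val_inj.
  by case/imsetP => f _ ->; apply/forallP => t; rewrite ffunE /=.
rewrite big_imset /=; last by move=> ? ? _ _; apply: phiI.
apply: congr_big => // f; first by rewrite inE.
move=> _; apply: eq_bigr => t _; rewrite ffunE /=.
by rewrite -GF.
Qed.
End DepDistr.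
Section Tens.
Variables (K : comNzRingType) (I : finType).

Definition tensr (m n : I -> nat) (A : forall t, 'M[K]_(m t, n t))
  : 'M[K]_(tdim m, tdim n) :=
  \matrix_(i, k) \prod_(t : I)
     A t ((enum_val i : tidx m) t) ((enum_val k : tidx n) t).

Lemma tensmxE (d : I -> nat) (A : forall t, 'M[K]_(d t)) : tensmx A = tensr A.
Proof. by []. Qed.

Lemma eq_tensr (m n : I -> nat) (A B : forall t, 'M[K]_(m t, n t)) :
  (forall t, A t = B t) -> tensr A = tensr B.
Proof. by move=> h; apply/matrixP => i k; rewrite /tensr !mxE; apply: eq_bigr => t _; rewrite h. Qed.

Lemma tensr_mul (m n p : I -> nat) (A : forall t, 'M[K]_(m t, n t))
   (B : forall t, 'M[K]_(n t, p t)) :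
  tensr A *m tensr B = tensr (fun t => A t *m B t).
Proof.
apply/matrixP => i k; rewrite /tensr !mxE.
set ei := (enum_val i : tidx m); set ek := (enum_val k : tidx p).
pose H (f : tidx n) := \prod_t (A t (ei t) (f t) * B t (f t) (ek t)).
transitivity (\sum_(j < tdim n) H (enum_val j)).
  by apply: eq_bigr => j _; rewrite !mxE -big_split.
rewrite -(big_enum_val H) /=.
under [RHS]eq_bigr do rewrite mxE.
rewrite (dep_distr (fun t j => A t (ei t) j * B t j (ek t))).
by apply: eq_bigl => f; rewrite inE.
Qed.

Lemma tensr1 (d : I -> nat) : tensr (fun t => (1%:M : 'M[K]_(d t))) = 1%:M.
Proof.
apply/matrixP => i k; rewrite /tensr !mxE.
have [->|ne] := eqVneq i k.
  by apply: big1 => t _; rewrite mxE eqxx.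
have /existsP [t ht] : [exists t, (enum_val i : tidx d) t != (enum_val k : tidx d) t].
  rewrite -negb_forall; apply: contra ne => /forallP h; apply/eqP.
  by apply: enum_val_inj; apply/ffunP => t; apply/eqP/h.
by rewrite (bigD1 t) //= mxE (negbTE ht) mul0r.
Qed.

End Tens.

Lemma map_tensr (K K' : comNzRingType) (I : finType) (f : {rmorphism K -> K'}) (m n : I -> nat)
  (A : forall t, 'M[K]_(m t, n t)) :
  map_mx f (tensr A) = tensr (fun t => map_mx f (A t)).
Proof.
apply/matrixP => i k; rewrite /tensr !mxE rmorph_prod.
by apply: eq_bigr => t _; rewrite mxE.
Qed.
Lemma tdimE (I : finType) (r : I -> nat) : tdim r = (\prod_(t : I) r t)%N.
Proof.
rewrite /tdim /tidx card_dep_ffun -big_enum /= /image_mem.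
elim: (enum _) => [|x s IH] /=; first by rewrite big_nil.
by rewrite big_cons IH card_ord.
Qed.

Lemma rank_tensr (K : fieldType) (I : finType) (m n : I -> nat)
  (A : forall t, 'M[K]_(m t, n t)) :
  \rank (tensr A) = (\prod_(t : I) \rank (A t))%N.
Proof.
have eA : tensr A = tensr (fun t => col_base (A t)) *m tensr (fun t => row_base (A t)).
  by rewrite tensr_mul; apply: eq_tensr => t; rewrite mulmx_base.
have [L hL] : exists L : forall t, 'M[K]_(\rank (A t), m t),
    forall t, L t *m col_base (A t) = 1%:M.
  by apply: (@fin_all_exists _ (fun t => 'M[K]_(\rank (A t), m t)) (fun t L => L *m col_base (A t) = 1%:M)) => t; apply/row_fullP/col_base_full.
have [S hS] : exists S : forall t, 'M[K]_(n t, \rank (A t)),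
    forall t, row_base (A t) *m S t = 1%:M.
  by apply: (@fin_all_exists _ (fun t => 'M[K]_(n t, \rank (A t))) (fun t S => row_base (A t) *m S = 1%:M)) => t; apply/row_freeP/row_base_free.
have full : row_full (tensr (fun t => col_base (A t))).
  by apply/row_fullP; exists (tensr L); rewrite tensr_mul (eq_tensr hL) tensr1.
have free : row_free (tensr (fun t => row_base (A t))).
  by apply/row_freeP; exists (tensr S); rewrite tensr_mul (eq_tensr hS) tensr1.
rewrite eA (eqmxMfull _ full).
by move/eqP: free => ->; rewrite tdimE.
Qed.
From mathcomp Require Import zify.

Section PhiSec.
Variables (K : fieldType) (n N : nat) (Phi : 'M[K]_n -> 'M[K]_N) (c : nat).
Hypothesis mono : forall X Y : 'M[K]_n, (X <= Y)%MS -> (Phi X <= Phi Y)%MS.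
Hypothesis adds : forall X Y : 'M[K]_n, (Phi (X + Y)%MS <= Phi X + Phi Y)%MS.
Hypothesis rk : forall X : 'M[K]_n, \rank (Phi X) = (\rank X * c)%N.

Lemma Phi_addsE X Y : (Phi (X + Y)%MS :=: Phi X + Phi Y)%MS.
Proof.
apply/eqmxP/andP; split; first exact: adds.
by rewrite addsmx_sub !mono ?addsmxSl ?addsmxSr.
Qed.

Lemma Phi_capE X Y : (Phi (X :&: Y)%MS :=: Phi X :&: Phi Y)%MS.
Proof.
have le1 : (Phi (X :&: Y)%MS <= Phi X :&: Phi Y)%MS.
  by rewrite sub_capmx !mono ?capmxSl ?capmxSr.
apply/eqmxP/andP; split => //.
have := mxrank_leqif_sup le1; case => _ <-.
have e1 := mxrank_sum_cap (Phi X) (Phi Y).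
have e2 := mxrank_sum_cap X Y.
have e3 : \rank (Phi X + Phi Y)%MS = \rank (Phi (X + Y)%MS) by rewrite (Phi_addsE X Y).
rewrite e3 !rk in e1.
rewrite rk.
have : (\rank (X + Y)%MS * c + \rank (Phi X :&: Phi Y) =
        \rank (X + Y)%MS * c + \rank (X :&: Y)%MS * c)%N.
  by rewrite e1 -!mulnDl e2.
by move/addnI => ->; rewrite eqxx.
Qed.

Lemma Phi_0 Z : (Z <= (0 : 'M[K]_n))%MS -> (Phi Z <= (0 : 'M[K]_N))%MS.
Proof.
move=> hZ; rewrite submx0 -mxrank_eq0 rk.
by move: hZ; rewrite submx0 -mxrank_eq0 => /eqP ->.
Qed.

Lemma Phi_sumE (s : seq int) (H : int -> 'M[K]_n) :
  (Phi (\sum_(p <- s) H p)%MS :=: \sum_(p <- s) Phi (H p))%MS.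
Proof.
elim: s => [|x s IH].
  rewrite !big_nil; apply/eqmxP/andP; split; last by rewrite sub0mx.
  by apply: Phi_0.
rewrite !big_cons; apply: eqmx_trans (Phi_addsE _ _) _.
exact: adds_eqmx.
Qed.

Lemma sums_eqmx (s : seq int) (H1 : int -> 'M[K]_N) (H2 : int -> 'M[K]_N) :
  (forall p, (H1 p :=: H2 p)%MS) ->
  (\sum_(p <- s) H1 p :=: \sum_(p <- s) H2 p)%MS.
Proof.
move=> h; elim: s => [|x s IH]; first by rewrite !big_nil.
by rewrite !big_cons; apply: adds_eqmx.
Qed.

Lemma asc_tr (W : int -> 'M[K]_n) (W' : int -> 'M[K]_N) (U' : 'M[K]_N) :
  asc_filt_in 1%:M W -> (U' :=: Phi 1%:M)%MS ->
  (forall k Z, (W' k :&: Phi Z :=: Phi (W k :&: Z)%MS)%MS) ->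
  asc_filt_in U' W'.
Proof.
move=> [hm [a [b [ha hb]]]] hU hW.
have E k : (W' k :&: U' :=: Phi (W k :&: 1%:M)%MS)%MS.
  exact: eqmx_trans (cap_eqmx (eqmx_refl _) hU) (hW k 1%:M).
split; first by move=> k; rewrite (E k) (E (k + 1)); apply: mono.
exists a, b; split => k hk; first by rewrite (E k); apply: Phi_0; apply: ha.
apply: submx_trans (capmxSl _ U').
rewrite (E k) hU; apply: mono.
by rewrite sub_capmx (hb k hk) submx_refl.
Qed.

Lemma desc_tr (F : int -> 'M[K]_n) (F' : int -> 'M[K]_N) (U' : 'M[K]_N) :
  desc_filt_in 1%:M F -> (U' :=: Phi 1%:M)%MS ->
  (forall k Z, (F' k :&: Phi Z :=: Phi (F k :&: Z)%MS)%MS) ->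
  desc_filt_in U' F'.
Proof.
move=> [hm [a [b [ha hb]]]] hU hF.
have E k : (F' k :&: U' :=: Phi (F k :&: 1%:M)%MS)%MS.
  exact: eqmx_trans (cap_eqmx (eqmx_refl _) hU) (hF k 1%:M).
split; first by move=> k; rewrite (E k) (E (k + 1)); apply: mono.
exists a, b; split => k hk; last by rewrite (E k); apply: Phi_0; apply: hb.
apply: submx_trans (capmxSl _ U').
rewrite (E k) hU; apply: mono.
by rewrite sub_capmx (ha k hk) submx_refl.
Qed.

Lemma hodge_tr (W F G : int -> 'M[K]_n) (W' F' G' : int -> 'M[K]_N) (U' : 'M[K]_N) :
  hodge_graded 1%:M W F G -> (U' :=: Phi 1%:M)%MS ->
  (forall k Z, (W' k :&: Phi Z :=: Phi (W k :&: Z)%MS)%MS) ->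
  (forall k Z, (F' k :&: Phi Z :=: Phi (F k :&: Z)%MS)%MS) ->
  (forall k Z, (G' k :&: Phi Z :=: Phi (G k :&: Z)%MS)%MS) ->
  hodge_graded U' W' F' G'.
Proof.
move=> h hU hW hF hG k Wk' Wk1' H'.
have [h1 h2] := h k.
have E j : (W' j :&: U' :=: Phi (W j :&: 1%:M)%MS)%MS.
  exact: eqmx_trans (cap_eqmx (eqmx_refl _) hU) (hW j 1%:M).
pose Wk := (W k :&: 1%:M)%MS.
pose Wk1 := (W (k - 1) :&: 1%:M)%MS.
pose H := fun p : int =>
      ((F p :&: Wk + Wk1) :&: (G (k - p) :&: Wk + Wk1))%MS.
have EH p : (H' p :=: Phi (H p))%MS.
  rewrite /H' /H.
  apply: eqmx_trans _ (eqmx_sym (Phi_capE _ _)).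
  apply: cap_eqmx.
    apply: eqmx_trans _ (eqmx_sym (Phi_addsE _ _)).
    apply: adds_eqmx; last exact: E.
    exact: eqmx_trans (cap_eqmx (eqmx_refl _) (E k)) (hF _ _).
  apply: eqmx_trans _ (eqmx_sym (Phi_addsE _ _)).
  apply: adds_eqmx; last exact: E.
  exact: eqmx_trans (cap_eqmx (eqmx_refl _) (E k)) (hG _ _).
have ES s : (Wk1' + \sum_(p <- s) H' p :=: Phi (Wk1 + \sum_(p <- s) H p)%MS)%MS.
  apply: eqmx_trans _ (eqmx_sym (Phi_addsE _ _)).
  apply: adds_eqmx; first exact: E.
  apply: eqmx_trans (sums_eqmx s EH) _.
  exact: eqmx_sym (Phi_sumE _ _).
split.
  case: h1 => s hs; exists s.
  by rewrite /Wk' (E k) (ES s); apply: mono.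
move=> s us.
rewrite (ES s) rk /Wk1' (E (k - 1)) rk.
under eq_bigr do rewrite (EH _) rk.
rewrite -mulnBl (h2 s us) big_distrl /=.
by apply: eq_bigr => p _; rewrite mulnBl.
Qed.
End PhiSec.

Section PsiSec.
Variables (K : fieldType) (I : finType) (d : I -> nat) (tau : I).
Local Notation N := (tdim d).

Definition sel (B : forall t, 'M[K]_(d t)) (X : 'M[K]_(d tau)) : forall t, 'M[K]_(d t) :=
  fun t => match tau =P t with
           | ReflectT e => eq_rect tau (fun s => 'M[K]_(d s)) X t e
           | ReflectF _ => B t end.

Definition one : forall t, 'M[K]_(d t) := fun t => 1%:M.

Definition Psi B X : 'M[K]_N := tensmx (sel B X).

Lemma sel_tau B X : sel B X tau = X.
Proof. by rewrite /sel; case: eqP => // e; rewrite (eq_axiomK e). Qed.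

Lemma sel_neq B X t : t != tau -> sel B X t = B t.
Proof. by move=> ne; rewrite /sel; case: eqP => // e; rewrite e eqxx in ne. Qed.

Lemma PsiE (B Y : forall t, 'M[K]_(d t)) :
  tensmx (fun t => if t == tau then Y t else B t) = Psi B (Y tau).
Proof.
rewrite /Psi !tensmxE; apply: eq_tensr => t.
case: (eqVneq t tau) => [->|ne]; first by rewrite sel_tau.
by rewrite sel_neq.
Qed.

Lemma Psi_mulE B X Y : Psi B (X *m Y) = Psi one X *m Psi B Y.
Proof.
rewrite /Psi !tensmxE tensr_mul; apply: eq_tensr => t.
case: (eqVneq t tau) => [->|ne]; first by rewrite !sel_tau.
by rewrite !sel_neq // mul1mx.
Qed.

Lemma Psi_split B X : Psi B X = Psi B 1%:M *m Psi one X.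
Proof.
rewrite /Psi !tensmxE tensr_mul; apply: eq_tensr => t.
case: (eqVneq t tau) => [->|ne]; first by rewrite !sel_tau mul1mx.
by rewrite !sel_neq // mulmx1.
Qed.

Lemma Psi_add B X Y : Psi B (X + Y) = Psi B X + Psi B Y.
Proof.
apply/matrixP => i k; rewrite /Psi /tensmx !mxE.
rewrite (bigD1 tau) //= [X in _ = X + _](bigD1 tau) //= [X in _ = _ + X](bigD1 tau) //=.
rewrite !sel_tau mxE mulrDl; congr (_ * _ + _ * _); apply: eq_bigr => t ht;
  by rewrite !sel_neq.
Qed.

Lemma Psi_mono B X Y : (X <= Y)%MS -> (Psi B X <= Psi B Y)%MS.
Proof. by case/submxP => D ->; rewrite Psi_mulE submxMl. Qed.

Lemma Psi_le1 B X : (Psi B X <= Psi one X)%MS.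
Proof. by rewrite Psi_split submxMl. Qed.

Lemma Psi_rank B X :
  \rank (Psi B X) = (\rank X * \prod_(t | t != tau) \rank (B t))%N.
Proof.
rewrite /Psi tensmxE rank_tensr (bigD1 tau) //= sel_tau; congr (_ * _)%N.
by apply: eq_bigr => t ht; rewrite sel_neq.
Qed.

Lemma Psi_adds B X Y : (Psi B (X + Y)%MS <= Psi B X + Psi B Y)%MS.
Proof.
have : ((X + Y)%MS <= X + Y)%MS by [].
case/sub_addsmxP => u ->.
by rewrite Psi_add !Psi_mulE addmx_sub_adds ?submxMl.
Qed.

Lemma tens_proj m (C : 'M[K]_(m, N)) (A Q : forall t, 'M[K]_(d t)) :
  (forall t, A t *m Q t = A t) -> (C <= tensmx A)%MS -> C *m tensmx Q = C.
Proof.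
move=> h /submxP [D ->]; rewrite -mulmxA !tensmxE tensr_mul.
by rewrite (eq_tensr h).
Qed.

Lemma Psi_diff m (C : 'M[K]_(m, N)) B Y :
  (C <= Psi one Y)%MS -> (C <= Psi B 1%:M)%MS -> (C <= Psi B Y)%MS.
Proof.
pose pY := pinvmx Y *m Y.
pose pB t := pinvmx (B t) *m B t.
move=> /(tens_proj (Q := sel one pY)) h1 /(tens_proj (Q := sel pB 1%:M)) h2.
have {}h1 : C *m tensmx (sel one pY) = C.
  apply: h1 => t; case: (eqVneq t tau) => [->|ne].
    by rewrite !sel_tau /pY mulmxA mulmxKpV.
  by rewrite !sel_neq // mulmx1.
have {}h2 : C *m tensmx (sel pB 1%:M) = C.
  apply: h2 => t; case: (eqVneq t tau) => [->|ne].
    by rewrite !sel_tau mulmx1.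
  by rewrite !sel_neq // /pB mulmxA mulmxKpV.
have e : C = C *m tensmx (sel (fun t => pinvmx (B t)) (pinvmx Y)) *m Psi B Y.
  rewrite -mulmxA /Psi !tensmxE tensr_mul.
  rewrite -[LHS]h2 -[in LHS]h1 -mulmxA !tensmxE tensr_mul; congr (_ *m _).
  apply: eq_tensr => t; case: (eqVneq t tau) => [->|ne].
    by rewrite !sel_tau mulmx1.
  by rewrite !sel_neq // mul1mx.
by rewrite e submxMl.
Qed.

Lemma Psi_capE B X Z : (Psi one X :&: Psi B Z :=: Psi B (X :&: Z)%MS)%MS.
Proof.
set c := (\prod_(t | t != tau) \rank (B t))%N.
have capB : forall U V, (Psi B U :&: Psi B V :=: Psi B (U :&: V)%MS)%MS.
  move=> U V; apply: eqmx_sym; apply: (@Phi_capE _ _ _ (Psi B) c).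
  - exact: Psi_mono.
  - exact: Psi_adds.
  - by move=> W; rewrite Psi_rank.
apply/eqmxP/andP; split; last first.
  rewrite sub_capmx Psi_mono ?capmxSr // andbT.
  apply: submx_trans (Psi_le1 B (X :&: Z)%MS) _; exact: Psi_mono (capmxSl _ _).
rewrite -(capB X Z) sub_capmx capmxSr andbT.
apply: Psi_diff; first exact: capmxSl.
apply: submx_trans (capmxSr _ _) _; exact: Psi_mono (submx1 _).
Qed.
End PsiSec.

Section MapFilt.
Variables (K L : fieldType) (f : {rmorphism K -> L}) (n : nat).

Lemma map_cap1 (A : 'M[K]_n) :
  (map_mx f A :&: 1%:M :=: map_mx f (A :&: 1%:M)%MS)%MS.
Proof. by rewrite -(map_mx1 f); apply: eqmx_sym; apply: map_capmx. Qed.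

Lemma asc_map (W : int -> 'M[K]_n) :
  asc_filt_in 1%:M W -> asc_filt_in 1%:M (fun k => map_mx f (W k)).
Proof.
move=> [hm [a [b [ha hb]]]]; split.
  by move=> k; rewrite !map_cap1 map_submx.
exists a, b; split => k hk.
  by rewrite map_cap1 -(map_mx0 f) map_submx; apply: ha.
by rewrite -(map_mx1 f) map_submx; apply: hb.
Qed.

Lemma desc_map (F : int -> 'M[K]_n) :
  desc_filt_in 1%:M F -> desc_filt_in 1%:M (fun k => map_mx f (F k)).
Proof.
move=> [hm [a [b [ha hb]]]]; split.
  by move=> k; rewrite !map_cap1 map_submx.
exists a, b; split => k hk.
  by rewrite -(map_mx1 f) map_submx; apply: ha.
by rewrite map_cap1 -(map_mx0 f) map_submx; apply: hb.
Qed.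
End MapFilt.

Section Main.
Variables (R : realType) (I : finType) (d : I -> nat)
    (W : forall t : I, int -> 'M[R]_(d t))
    (F : forall t : I, int -> 'M[R[i]]_(d t)).

Lemma cplxE m n (A : 'M[R]_(m, n)) : cplx_mx A = map_mx (real_complex R) A.
Proof. by []. Qed.

Lemma conjE m n (A : 'M[R[i]]_(m, n)) : conj_mx A = map_mx conjc A.
Proof. by []. Qed.

Lemma WtE tau k : cplx_mx (tensW W tau k) = Psi (tau:=tau) (one _ d) (cplx_mx (W tau k)).
Proof.
rewrite cplxE /tensW !tensmxE map_tensr -tensmxE.
rewrite -(PsiE tau (one _ d) (fun t => cplx_mx (W t k))); rewrite !tensmxE; apply: eq_tensr => t.
by case: eqP => _; rewrite ?map_mx1.
Qed.

Lemma FtE tau k : tensF F tau k = Psi (tau:=tau) (one _ d) (F tau k).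
Proof. by rewrite -(PsiE tau (one _ d) (fun t => F t k)). Qed.

Lemma FbtE tau k : conj_mx (tensF F tau k) = Psi (tau:=tau) (one _ d) (conj_mx (F tau k)).
Proof.
rewrite conjE /tensF !tensmxE map_tensr -tensmxE.
rewrite -(PsiE tau (one _ d) (fun t => conj_mx (F t k))); rewrite !tensmxE; apply: eq_tensr => t.
by case: eqP => _; rewrite ?map_mx1.
Qed.

Lemma main_tr tau (B : forall t, 'M[R[i]]_(d t)) (U' : 'M[R[i]]_(tdim d)) :
  mhsR (W tau) (F tau) -> (U' :=: Psi (tau:=tau) B 1%:M)%MS ->
  mhsC U' (fun k => cplx_mx (tensW W tau k)) (tensF F tau)
          (fun p => conj_mx (tensF F tau p)).
Proof.
case=> hW hF hH hU.
have mono := @Psi_mono _ _ d tau B.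
have adds := @Psi_adds _ _ d tau B.
have rk : forall X, \rank (Psi (tau:=tau) B X) = (\rank X * \prod_(t | t != tau) \rank (B t))%N.
  by move=> X; rewrite Psi_rank.
split.
- apply: (asc_tr mono rk (asc_map (real_complex R) hW) hU) => k Z.
  by rewrite WtE; apply: Psi_capE.
- apply: (desc_tr mono rk hF hU) => k Z.
  by rewrite FtE; apply: Psi_capE.
- apply: (desc_tr mono rk (desc_map conjc hF) hU) => k Z.
  by rewrite FbtE; apply: Psi_capE.
- apply: (hodge_tr mono adds rk hH hU) => k Z.
  + by rewrite WtE; apply: Psi_capE.
  + by rewrite FtE; apply: Psi_capE.
  + by rewrite FbtE; apply: Psi_capE.
Qed.
End Main.

Lemma Psi_one1 (K : fieldType) (I : finType) (d : I -> nat) (tau : I) :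
  Psi (tau:=tau) (one K d) 1%:M = 1%:M.
Proof.
rewrite /Psi tensmxE -(tensr1 K d); apply: eq_tensr => t.
by case: (eqVneq t tau) => [->|ne]; rewrite ?sel_tau ?sel_neq.
Qed.

Lemma Psi_nu (K : fieldType) (I : finType) (d : I -> nat) (tau nu : I)
  (M : forall t, 'M[K]_(d t)) : tau != nu ->
  tensmx (fun t => if t == nu then M t else 1%:M) =
  Psi (tau:=tau) (fun t => if t == nu then M t else 1%:M) 1%:M.
Proof.
move=> ne; rewrite /Psi !tensmxE; apply: eq_tensr => t.
case: (eqVneq t tau) => [->|ne']; last by rewrite sel_neq.
by rewrite sel_tau (negbTE ne).
Qed.

Unset Implicit Arguments.

Theorem proposition6p2 (R : realType) (I : finType) (d : I -> nat)
    (W : forall t : I, int -> 'M[R]_(d t))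
    (F : forall t : I, int -> 'M[R[i]]_(d t)) :
  (forall t : I, mhsR (W t) (F t)) ->
  mhs_boxI (tensW W) (tensF F).
Proof.
move=> h; split.
  move=> tau.
  have hm := main_tr (tau:=tau) (B := one _ d) (U' := 1%:M) (h tau)
     (eq_rect _ (fun M => (M :=: _)%MS) (eqmx_refl _) _ (Psi_one1 _ d tau)).
  case: (h tau) => hW hF hH; case: hm => _ hF' _ hH'; split => //.
  have mono := @Psi_mono _ _ d tau (one R d).
  have rk : forall X, \rank (Psi (tau:=tau) (one R d) X) =
      (\rank X * \prod_(t | t != tau) \rank (one R d t))%N.
    by move=> X; rewrite Psi_rank.
  apply: (asc_tr mono rk hW) => [|k Z].
    by rewrite Psi_one1.
  rewrite /tensW (PsiE tau (one _ d) (fun t => W t k)).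
  exact: Psi_capE.
move=> tau nu ne m Wt Ft Fbt.
split; apply: main_tr (h tau) _.
- rewrite cplxE /tensW tensmxE map_tensr -tensmxE.
  rewrite (_ : tensmx _ = tensmx (fun t => if t == nu then cplx_mx (W t m) else 1%:M)).
    by rewrite (Psi_nu _ ne).
  rewrite !tensmxE; apply: eq_tensr => t.
  by case: eqP => _; rewrite ?map_mx1.
- by rewrite /tensF (Psi_nu _ ne).
- rewrite conjE /tensF tensmxE map_tensr -tensmxE.
  rewrite (_ : tensmx _ = tensmx (fun t => if t == nu then conj_mx (F t m) else 1%:M)).
    by rewrite (Psi_nu _ ne).
  rewrite !tensmxE; apply: eq_tensr => t.
  by case: eqP => _; rewrite ?map_mx1.
Qed.
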